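(* Let $m$ be a positive integer. If $\|m\alpha\|\ge\|q_{k-1}\alpha\|+(a_{k+1}+1)\|q_k\alpha\|$ for some $k\ge2$, then $\mathrm{ab}_\alpha(m)<q_k-1$.
   Context: $\alpha\in(0,1)$ irrational, $\alpha=[0;a_1,a_2,\ldots]$ with positive integers $a_i$, $a_1\ge2$; $q_{-1}=0$, $q_0=1$, $q_1=a_1$, $q_k=a_kq_{k-1}+q_{k-2}$ ($k\ge2$). $\|x\|$ is the distance from $x$ to the nearest integer. Sturmian words of slope $\alpha$: with $R(\rho)=\{\rho+\alpha\}$ on $[0,1)$ and either $I_0=[0,1-\alpha)$ or $I_0=(0,1-\alpha]$ ($I_1$ its complement), $\mathbf{s}_{\rho,\alpha}$ has $n$-th letter $0$ iff $R^n(\rho)\in I_0$; they share a set $\mathcal{L}_\alpha$ of finite factors. An abelian power of period $m$ and exponent $e$ is a concatenation of $e$ pairwise abelian equivalent words (same numbers of $0$s and $1$s) of length $m$; $\mathrm{ab}_\alpha(m)$ is the maximum exponent of an abelian power of period $m$ in $\mathcal{L}_\alpha$ (it is known that $\mathrm{ab}_\alpha(m)=\lfloor 1/\|m\alpha\|\rfloor$). *)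

(* Defs.v *)
From Stdlib Require Import Reals Lra Lia ZArith Arith List.
Open Scope R_scope.

Definition irrational (x : R) : Prop :=
  ~ exists (p q : Z), q <> 0%Z /\ x = IZR p / IZR q.

Definition frac (x : R) : R := frac_part x.

Definition dnint (x : R) : R := Rmin (frac x) (1 - frac x).

(* Continued fraction expansion alpha = [0; a_1, a_2, ...] via the Gauss map:
   cf_rem alpha 0 = alpha, cf_rem alpha (n+1) = 1/x_n - floor(1/x_n),
   and a_{n+1} = floor (1 / x_n). *)
Fixpoint cf_rem (alpha : R) (n : nat) : R :=
  match n with
  | O => alpha
  | S n' => frac (/ cf_rem alpha n')
  end.

(* Partial quotients: pq alpha k = a_k for k >= 1 (pq alpha 0 = a_0 = 0 is unused). *)
Definition pq (alpha : R) (k : nat) : nat :=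
  match k with
  | O => 0%nat
  | S k' => Z.to_nat (Int_part (/ cf_rem alpha k'))
  end.

Fixpoint qd (alpha : R) (k : nat) : nat :=
  match k with
  | O => 1%nat
  | S k' =>
      match k' with
      | O => pq alpha 1
      | S k'' => (pq alpha k * qd alpha k' + qd alpha k'')%nat
      end
  end.

(* Sturmian word s_{rho,alpha}; letter false = 0, true = 1.
   left_closed = true : I_0 = [0, 1 - alpha);  left_closed = false : I_0 = (0, 1 - alpha].
   n-th letter (n >= 0) is 0 iff R^n(rho) = {rho + n alpha} lies in I_0. *)
Definition in_I0 (alpha : R) (left_closed : bool) (x : R) : Prop :=
  if left_closed then 0 <= x < 1 - alpha else 0 < x <= 1 - alpha.

Definition sturmian_letter (alpha rho : R) (left_closed : bool) (n : nat) (b : bool) : Prop :=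
  (b = false <-> in_I0 alpha left_closed (frac (rho + INR n * alpha))).

Definition in_L (alpha : R) (w : list bool) : Prop :=
  exists (rho : R) (left_closed : bool) (i : nat),
    (0 <= rho < 1) /\
    forall j, (j < length w)%nat ->
      sturmian_letter alpha rho left_closed (i + j)%nat (nth j w false).

Definition abelian_eq (u v : list bool) : Prop :=
  (count_occ Bool.bool_dec u false = count_occ Bool.bool_dec v false)%nat /\
  (count_occ Bool.bool_dec u true = count_occ Bool.bool_dec v true)%nat.

Definition abelian_power (m e : nat) (w : list bool) : Prop :=
  exists blocks : list (list bool),
    (length blocks = e)%nat /\
    (forall u, In u blocks -> (length u = m)%nat) /\
    (forall u v, In u blocks -> In v blocks -> abelian_eq u v) /\
    w = concat blocks.

Definition has_ab_power (alpha : R) (m e : nat) : Prop :=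
  exists w, in_L alpha w /\ abelian_power m e w.

(* is_ab alpha m n  <->  ab_alpha(m) = n, i.e. n is the maximum exponent of an
   abelian power of period m in L_alpha. *)
Definition is_ab (alpha : R) (m n : nat) : Prop :=
  has_ab_power alpha m n /\ forall e, has_ab_power alpha m e -> (e <= n)%nat.

(* Main.v *)
Require Import Defs.
From Stdlib Require Import Reals Arith Lra Lia ZArith List.
Open Scope R_scope.

Lemma Int_part_spec (y : R) (z : Z) : IZR z <= y < IZR z + 1 -> Int_part y = z.
Proof.
  intros [H1 H2]. unfold Int_part.
  rewrite <- (tech_up y (z + 1)). lia.
  rewrite plus_IZR; lra. rewrite plus_IZR; lra.
Qed.

Definition hh (lc : bool) (y : R) : Z := if lc then Int_part y else (- up (- y))%Z.

Lemma hh_spec_t y : 0 <= y - IZR (hh true y) < 1.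
Proof. simpl. destruct (base_Int_part y). lra. Qed.

Lemma hh_spec_f y : 0 < y - IZR (hh false y) <= 1.
Proof. simpl. rewrite opp_IZR. destruct (archimed (- y)). lra. Qed.

Lemma hh_uniq_t y z : IZR z <= y < IZR z + 1 -> hh true y = z.
Proof. simpl. apply Int_part_spec. Qed.

Lemma hh_uniq_f y z : IZR z < y <= IZR z + 1 -> hh false y = z.
Proof.
  intros [H1 H2]. simpl.
  rewrite <- (tech_up (- y) (- z)). lia.
  rewrite opp_IZR; lra. rewrite opp_IZR; lra.
Qed.

Lemma hh_diff lc y y' :
  Rabs ((y - IZR (hh lc y)) - (y' - IZR (hh lc y'))) < 1.
Proof.
  destruct lc.
  - pose proof (hh_spec_t y); pose proof (hh_spec_t y').
    unfold Rabs; destruct Rcase_abs; lra.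
  - pose proof (hh_spec_f y); pose proof (hh_spec_f y').
    unfold Rabs; destruct Rcase_abs; lra.
Qed.

Lemma letter_step alpha lc y (b : bool) :
  0 < alpha < 1 ->
  (b = false <-> in_I0 alpha lc (frac y)) ->
  IZR (hh lc (y + alpha)) = IZR (hh lc y) + (if b then 1 else 0).
Proof.
  intros Ha Hb. destruct lc.
  - pose proof (hh_spec_t y) as Hs.
    set (z := hh true y) in *.
    assert (Hf : frac y = y - IZR z) by reflexivity.
    unfold in_I0 in Hb. rewrite Hf in Hb.
    destruct b.
    + assert (~ (0 <= y - IZR z < 1 - alpha)) by (intro Hc; apply Hb in Hc; discriminate).
      rewrite (hh_uniq_t (y + alpha) (z + 1)). rewrite plus_IZR; ring.
      rewrite plus_IZR. lra.
    + assert (0 <= y - IZR z < 1 - alpha) by (apply Hb; reflexivity).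
      rewrite (hh_uniq_t (y + alpha) z). ring. lra.
  - pose proof (hh_spec_f y) as Hs.
    set (z := hh false y) in *.
    assert (Heq : in_I0 alpha false (frac y) <-> y - IZR z <= 1 - alpha).
    { unfold in_I0, frac, frac_part.
      destruct (Rlt_or_le (y - IZR z) 1) as [Hl|Hl].
      - rewrite (Int_part_spec y z) by lra. split; intros; lra.
      - rewrite (Int_part_spec y (z + 1)) by (rewrite plus_IZR; lra).
        rewrite plus_IZR. split; intros; lra. }
    rewrite Heq in Hb.
    destruct b.
    + assert (~ (y - IZR z <= 1 - alpha)) by (intro Hc; apply Hb in Hc; discriminate).
      rewrite (hh_uniq_f (y + alpha) (z + 1)). rewrite plus_IZR; ring.
      rewrite plus_IZR. lra.
    + assert (y - IZR z <= 1 - alpha) by (apply Hb; reflexivity).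
      rewrite (hh_uniq_f (y + alpha) z). ring. lra.
Qed.

Definition Yp (rho alpha : R) (P : nat) : R := rho + INR P * alpha.

Lemma count_lemma alpha rho lc : 0 < alpha < 1 ->
  forall (u : list bool) (P : nat),
  (forall t, (t < length u)%nat -> sturmian_letter alpha rho lc (P + t) (nth t u false)) ->
  INR (count_occ Bool.bool_dec u true) =
  IZR (hh lc (Yp rho alpha (P + length u))) - IZR (hh lc (Yp rho alpha P)).
Proof.
  intros Ha u. induction u as [|b u IH]; intros P H.
  - simpl. rewrite Nat.add_0_r. ring.
  - assert (Hb := H 0%nat ltac:(simpl; lia)). simpl in Hb.
    unfold sturmian_letter in Hb. rewrite Nat.add_0_r in Hb.
    pose proof (letter_step alpha lc _ b Ha Hb) as Hs.
    assert (HY : rho + INR P * alpha + alpha = Yp rho alpha (S P)).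
    { unfold Yp; rewrite S_INR; ring. }
    rewrite HY in Hs.
    assert (IH' := IH (S P)).
    replace (P + length (b :: u))%nat with (S P + length u)%nat by (simpl; lia).
    assert (Hr : forall t, (t < length u)%nat -> sturmian_letter alpha rho lc (S P + t) (nth t u false)).
    { intros t Ht. replace (S P + t)%nat with (P + S t)%nat by lia.
        apply (H (S t)). simpl; lia. }
    specialize (IH' Hr).
    unfold Yp at 2. 
    destruct b.
    + rewrite count_occ_cons_eq by reflexivity. rewrite S_INR, IH'. rewrite Hs. ring.
    + rewrite count_occ_cons_neq by discriminate. rewrite IH', Hs. ring.
Qed.

Lemma blocks_lemma alpha rho lc m : 0 < alpha < 1 ->
  forall (blocks : list (list bool)) (P : nat),
  (forall u, In u blocks -> length u = m) ->
  (forall t, (t < length (concat blocks))%nat ->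
      sturmian_letter alpha rho lc (P + t) (nth t (concat blocks) false)) ->
  forall j, (j < length blocks)%nat ->
  INR (count_occ Bool.bool_dec (nth j blocks nil) true) =
  IZR (hh lc (Yp rho alpha (P + j * m + m))) - IZR (hh lc (Yp rho alpha (P + j * m))).
Proof.
  intros Ha blocks. induction blocks as [|b bs IH]; intros P Hm Hl j Hj.
  - simpl in Hj; lia.
  - assert (Hb : length b = m) by (apply Hm; left; reflexivity).
    destruct j as [|j].
    + simpl nth. replace (P + 0 * m + m)%nat with (P + length b)%nat by lia.
      replace (P + 0 * m)%nat with P by lia.
      apply count_lemma; auto.
      intros t Ht. specialize (Hl t). simpl concat in Hl.
      rewrite app_nth1 in Hl by exact Ht. apply Hl.
      rewrite length_app; lia.
    + simpl nth.
      replace (P + S j * m + m)%nat with ((P + m) + j * m + m)%nat by lia.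
      replace (P + S j * m)%nat with ((P + m) + j * m)%nat by lia.
      apply IH.
      * intros u Hu; apply Hm; right; exact Hu.
      * intros t Ht. specialize (Hl (length b + t)%nat). simpl concat in Hl.
        rewrite app_nth2_plus in Hl. rewrite Hb in Hl.
        replace (P + m + t)%nat with (P + (m + t))%nat by lia. apply Hl.
        rewrite length_app; lia.
      * simpl in Hj; lia.
Qed.

Lemma ab_bound alpha m n : 0 < alpha < 1 -> has_ab_power alpha m n -> (1 <= n)%nat ->
  exists K : nat, INR n * Rabs (INR m * alpha - INR K) < 1.
Proof.
  intros Ha [w [[rho [lc [i [Hrho Hlet]]]] [blocks [Hlen [Hm [Hab Hw]]]]]] Hn.
  subst w.
  set (c := fun j : nat => IZR (hh lc (Yp rho alpha (i + j * m)))).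
  set (K := count_occ Bool.bool_dec (nth 0 blocks nil) true).
  assert (Hstep : forall j, (j < n)%nat -> c (S j) - c j = INR K).
  { intros j Hj. unfold c.
    replace (i + S j * m)%nat with (i + j * m + m)%nat by lia.
    rewrite <- (blocks_lemma alpha rho lc m Ha blocks i Hm Hlet j) by lia.
    unfold K. f_equal.
    assert (In (nth j blocks nil) blocks) by (apply nth_In; lia).
    assert (In (nth 0 blocks nil) blocks) by (apply nth_In; lia).
    apply (Hab _ _ H H0). }
  assert (Hsum : forall j, (j <= n)%nat -> c j - c 0%nat = INR j * INR K).
  { induction j; intros Hj. simpl; ring.
    rewrite S_INR. specialize (IHj ltac:(lia)). specialize (Hstep j ltac:(lia)). lra. }
  exists K.
  pose proof (hh_diff lc (Yp rho alpha (i + n * m)) (Yp rho alpha (i + 0 * m))) as Hd.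
  specialize (Hsum n (le_n n)). unfold c in Hsum.
  assert (HY : Yp rho alpha (i + n * m) - Yp rho alpha (i + 0 * m) = INR n * INR m * alpha).
  { unfold Yp. rewrite !plus_INR, !mult_INR. simpl. ring. }
  replace (Yp rho alpha (i + n * m) - IZR (hh lc (Yp rho alpha (i + n * m))) -
     (Yp rho alpha (i + 0 * m) - IZR (hh lc (Yp rho alpha (i + 0 * m)))))
    with (INR n * (INR m * alpha - INR K)) in Hd by lra.
  rewrite Rabs_mult, (Rabs_pos_eq (INR n)) in Hd by apply pos_INR. exact Hd.
Qed.


Lemma dnint_le x d : dnint x <= Rabs (x - IZR d).
Proof.
  unfold dnint, frac, frac_part.
  destruct (base_Int_part x) as [H1 H2].
  set (z := Int_part x) in *.
  destruct (Z_le_gt_dec d z) as [Hd|Hd].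
  - apply IZR_le in Hd. eapply Rle_trans. apply Rmin_l.
    unfold Rabs; destruct Rcase_abs; lra.
  - assert (Hd' : (z + 1 <= d)%Z) by lia. apply IZR_le in Hd'. rewrite plus_IZR in Hd'.
    eapply Rle_trans. apply Rmin_r.
    unfold Rabs; destruct Rcase_abs; lra.
Qed.

Lemma dnint_near z t : Rabs t < 1/2 -> dnint (IZR z + t) = Rabs t.
Proof.
  intros Ht. unfold dnint, frac, frac_part.
  destruct (Rle_or_lt 0 t) as [H|H].
  - rewrite Rabs_pos_eq in * by lra.
    rewrite (Int_part_spec _ z) by lra.
    unfold Rmin; destruct Rle_dec; lra.
  - rewrite Rabs_left in * by lra.
    rewrite (Int_part_spec _ (z - 1)) by (rewrite minus_IZR; lra).
    rewrite minus_IZR. unfold Rmin; destruct Rle_dec; lra.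
Qed.

Fixpoint pn (alpha : R) (k : nat) : nat :=
  match k with
  | O => 0%nat
  | S k' => match k' with
            | O => 1%nat
            | S k'' => (pq alpha k * pn alpha k' + pn alpha k'')%nat
            end
  end.

Definition ee alpha n := INR (qd alpha n) * alpha - INR (pn alpha n).
Definition th alpha n := Rabs (ee alpha n).

Lemma qd_SS alpha n : qd alpha (S (S n)) = (pq alpha (S (S n)) * qd alpha (S n) + qd alpha n)%nat.
Proof. reflexivity. Qed.
Lemma pn_SS alpha n : pn alpha (S (S n)) = (pq alpha (S (S n)) * pn alpha (S n) + pn alpha n)%nat.
Proof. reflexivity. Qed.

Lemma ee_SS alpha n : ee alpha (S (S n)) = INR (pq alpha (S (S n))) * ee alpha (S n) + ee alpha n.
Proof. unfold ee. rewrite qd_SS, pn_SS, !plus_INR, !mult_INR. ring. Qed.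

Lemma xstep alpha n : 0 < cf_rem alpha n < 1 ->
  INR (pq alpha (S n)) = / cf_rem alpha n - cf_rem alpha (S n) /\
  0 <= cf_rem alpha (S n) < 1 /\ (1 <= pq alpha (S n))%nat.
Proof.
  intros Hx.
  assert (Hr : 1 < / cf_rem alpha n).
  { rewrite <- Rinv_1. apply Rinv_lt_contravar; lra. }
  change (pq alpha (S n)) with (Z.to_nat (Int_part (/ cf_rem alpha n))).
  change (cf_rem alpha (S n)) with (frac (/ cf_rem alpha n)).
  unfold frac, frac_part.
  destruct (base_Int_part (/ cf_rem alpha n)) as [H1 H2].
  assert (Hp : (0 < Int_part (/ cf_rem alpha n))%Z) by (apply lt_IZR; lra).
  rewrite INR_IZR_INZ, Z2Nat.id by lia.
  split; [ring|]. split; [lra|lia].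
Qed.

Lemma estep alpha : 0 < alpha < 1 -> forall n,
  (forall j, (j <= n)%nat -> 0 < cf_rem alpha j < 1) ->
  ee alpha (S n) = - cf_rem alpha (S n) * ee alpha n.
Proof.
  intros Ha n. induction n as [|n IH]; intros H.
  - destruct (xstep alpha 0 (H 0%nat (le_n 0))) as [Hq _].
    simpl cf_rem in Hq. unfold ee.
    change (qd alpha 1) with (pq alpha 1). change (pn alpha 1) with 1%nat.
    change (qd alpha 0) with 1%nat. change (pn alpha 0) with 0%nat.
    assert (Hx : cf_rem alpha 1 = / alpha - INR (pq alpha 1)).
    { simpl cf_rem. lra. }
    rewrite Hx. simpl INR. field. lra.
  - rewrite ee_SS. rewrite IH by (intros; apply H; lia).
    pose proof (H (S n) (le_n _)) as Hx1.
    destruct (xstep alpha (S n) Hx1) as [Hq _].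
    rewrite Hq. field. lra.
Qed.

Lemma qd_pos alpha : (1 <= pq alpha 1)%nat -> forall n, (1 <= qd alpha n)%nat.
Proof.
  intros H1.
  assert (forall n, (1 <= qd alpha n)%nat /\ (1 <= qd alpha (S n))%nat).
  { induction n. split. simpl; lia. simpl. exact H1.
    destruct IHn. split. auto. rewrite qd_SS. lia. }
  intro n; apply H.
Qed.

Lemma xpos alpha : 0 < alpha < 1 -> irrational alpha -> (1 <= pq alpha 1)%nat ->
  forall n j, (j <= n)%nat -> 0 < cf_rem alpha j < 1.
Proof.
  intros Ha Hirr H1 n. induction n as [|n IH]; intros j Hj.
  - assert (j = 0%nat) by lia. subst. simpl. exact Ha.
  - destruct (Nat.le_gt_cases j n) as [Hl|Hl]. apply IH; exact Hl.
    assert (j = S n) by lia. subst j.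
    destruct (xstep alpha n (IH n (le_n n))) as [_ [[[H0|H0] Hlt] _]].
    + split; lra.
    + exfalso. apply Hirr.
      pose proof (estep alpha Ha n IH) as He. rewrite <- H0 in He.
      assert (Hq := qd_pos alpha H1 (S n)).
      exists (Z.of_nat (pn alpha (S n))), (Z.of_nat (qd alpha (S n))).
      split. lia.
      rewrite <- !INR_IZR_INZ. unfold ee in He.
      assert (INR (qd alpha (S n)) <> 0).
      { apply not_0_INR. lia. }
      field_simplify_eq; auto. lra.
Qed.

Section CF.
End CF.

Lemma th_S alpha : 0 < alpha < 1 -> irrational alpha -> (1 <= pq alpha 1)%nat ->
  forall n, th alpha (S n) = cf_rem alpha (S n) * th alpha n.
Proof.
  intros Ha Hi H1 n. unfold th.
  rewrite (estep alpha Ha n) by (intros; eapply xpos; eauto).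
  rewrite Rabs_mult, Rabs_Ropp, (Rabs_pos_eq (cf_rem alpha (S n))). reflexivity.
  pose proof (xpos alpha Ha Hi H1 (S n) (S n) (le_n _)). lra.
Qed.

Lemma th_SS alpha : 0 < alpha < 1 -> irrational alpha -> (1 <= pq alpha 1)%nat ->
  forall n, th alpha (S (S n)) = th alpha n - INR (pq alpha (S (S n))) * th alpha (S n).
Proof.
  intros Ha Hi H1 n.
  rewrite !(th_S alpha Ha Hi H1).
  pose proof (xpos alpha Ha Hi H1 (S n) (S n) (le_n _)) as Hx.
  destruct (xstep alpha (S n) Hx) as [Hq _]. rewrite Hq. field. lra.
Qed.

Lemma th_0 alpha : 0 < alpha -> th alpha 0 = alpha.
Proof. intros. unfold th, ee. simpl. rewrite Rabs_pos_eq; lra. Qed.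

Lemma ident alpha : 0 < alpha < 1 -> irrational alpha -> (1 <= pq alpha 1)%nat ->
  forall n, INR (qd alpha (S n)) * th alpha n + INR (qd alpha n) * th alpha (S n) = 1.
Proof.
  intros Ha Hi H1 n. induction n as [|n IH].
  - rewrite (th_S alpha Ha Hi H1), th_0 by lra.
    pose proof (xpos alpha Ha Hi H1 0 0 (le_n _)) as Hx.
    destruct (xstep alpha 0 Hx) as [Hq _]. change (cf_rem alpha 0) with alpha in Hq.
    change (qd alpha 1) with (pq alpha 1). change (qd alpha 0) with 1%nat.
    assert (Hc : cf_rem alpha 1 = / alpha - INR (pq alpha 1)) by lra.
    rewrite Hc. simpl INR. field. lra.
  - rewrite qd_SS, (th_SS alpha Ha Hi H1), plus_INR, mult_INR.
    rewrite <- IH. ring.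
Qed.

Lemma th_bounds alpha : 0 < alpha < 1 -> irrational alpha -> (2 <= pq alpha 1)%nat ->
  forall n, 0 < th alpha (S n) < 1/2.
Proof.
  intros Ha Hi H2.
  assert (H1 : (1 <= pq alpha 1)%nat) by lia.
  assert (Hhalf : alpha <= 1/2).
  { pose proof (xpos alpha Ha Hi H1 0 0 (le_n _)) as Hx.
    destruct (xstep alpha 0 Hx) as [Hq [Hx1 _]]. change (cf_rem alpha 0) with alpha in Hq.
    assert (2 <= INR (pq alpha 1)) by (replace 2 with (INR 2) by (simpl; ring); apply le_INR; exact H2).
    assert (alpha * / alpha = 1) by (field; lra).
    assert (2 <= / alpha) by lra. nra. }
  induction n as [|n IH].
  - rewrite (th_S alpha Ha Hi H1), th_0 by lra.
    pose proof (xpos alpha Ha Hi H1 1 1 (le_n _)). nra.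
  - rewrite (th_S alpha Ha Hi H1).
    pose proof (xpos alpha Ha Hi H1 (S (S n)) (S (S n)) (le_n _)). nra.
Qed.

Lemma dnint_q alpha : 0 < alpha < 1 -> irrational alpha -> (2 <= pq alpha 1)%nat ->
  forall n, dnint (INR (qd alpha (S n)) * alpha) = th alpha (S n).
Proof.
  intros Ha Hi H2 n.
  pose proof (th_bounds alpha Ha Hi H2 n) as Hb.
  replace (INR (qd alpha (S n)) * alpha) with (IZR (Z.of_nat (pn alpha (S n))) + ee alpha (S n)).
  apply dnint_near. unfold th in Hb. lra.
  unfold ee. rewrite <- INR_IZR_INZ. ring.
Qed.

Lemma qd_ge2 alpha : 0 < alpha < 1 -> irrational alpha -> (2 <= pq alpha 1)%nat ->
  forall n, (2 <= qd alpha (S n))%nat.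
Proof.
  intros Ha Hi H2. assert (H1 : (1 <= pq alpha 1)%nat) by lia.
  induction n. simpl. exact H2.
  rewrite qd_SS.
  destruct (xstep alpha (S n) (xpos alpha Ha Hi H1 _ _ (le_n _))) as [_ [_ Ha2]].
  nia.
Qed.

Theorem lemma3p2 (alpha : R) (m k : nat) :
  0 < alpha < 1 ->
  irrational alpha ->
  (2 <= pq alpha 1)%nat ->
  (1 <= m)%nat ->
  (2 <= k)%nat ->
  dnint (INR (qd alpha (k - 1)) * alpha)
    + (INR (pq alpha (k + 1)) + 1) * dnint (INR (qd alpha k) * alpha)
    <= dnint (INR m * alpha) ->
  forall n : nat, is_ab alpha m n -> (n < qd alpha k - 1)%nat.
Proof.
  intros Ha Hi H2 Hm Hk Hineq n Hab.
  assert (H1 : (1 <= pq alpha 1)%nat) by lia.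
  destruct k as [|[|j]]; try lia.
  replace (S (S j) - 1)%nat with (S j) in Hineq by lia.
  replace (S (S j) + 1)%nat with (S (S (S j))) in Hineq by lia.
  rewrite !(dnint_q alpha Ha Hi H2) in Hineq.
  set (A := th alpha (S j)) in *.
  set (B := th alpha (S (S j))) in *.
  set (a := pq alpha (S (S (S j)))) in *.
  set (d := dnint (INR m * alpha)) in *.
  pose proof (th_SS alpha Ha Hi H1 (S j)) as HC. fold A B a in HC.
  set (C := th alpha (S (S (S j)))) in *.
  pose proof (th_bounds alpha Ha Hi H2 (S (S j))) as HCb. fold C in HCb.
  pose proof (th_bounds alpha Ha Hi H2 (S j)) as HBb. fold B in HBb.
  pose proof (th_S alpha Ha Hi H1 (S (S j))) as HCS. fold C B in HCS.
  pose proof (xpos alpha Ha Hi H1 _ _ (le_n (S (S (S j))))) as Hx3.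
  assert (HCB : C < B) by nra.
  destruct (xstep alpha (S (S j)) (xpos alpha Ha Hi H1 _ _ (le_n _))) as [_ [_ Ha1]].
  fold a in Ha1. apply le_INR in Ha1. simpl INR in Ha1.
  pose proof (ident alpha Ha Hi H1 (S j)) as Hid. fold A B in Hid.
  pose proof (qd_ge2 alpha Ha Hi H2 j) as Hq1.
  destruct (xstep alpha (S j) (xpos alpha Ha Hi H1 _ _ (le_n _))) as [_ [_ Hak]].
  pose proof (qd_pos alpha H1 j) as Hq0.
  assert (Hq2 : (qd alpha (S j) + 1 <= qd alpha (S (S j)))%nat) by (rewrite qd_SS; nia).
  set (Q := qd alpha (S (S j))) in *.
  set (Q' := qd alpha (S j)) in *.
  pose proof Hq2 as Hq2n. pose proof Hq1 as Hq1n.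
  apply le_INR in Hq1. apply le_INR in Hq2. rewrite plus_INR in Hq2. simpl INR in Hq1, Hq2.
  assert (HaB : INR a * B = A - C) by lra.
  assert (HX : 1 <= (A + (INR a + 1) * B) * (INR Q - 1)).
  { assert (0 <= (INR Q - 2) * (A - B - C)) by (apply Rmult_le_pos; nra).
    assert (0 <= (2 * INR Q - 4 - INR Q') * B) by (apply Rmult_le_pos; nra).
    nra. }
  assert (HXpos : 0 < A + (INR a + 1) * B) by nra.
  destruct n as [|n'].
  - lia.
  - destruct (ab_bound alpha m (S n') Ha (proj1 Hab) ltac:(lia)) as [K HK].
    pose proof (dnint_le (INR m * alpha) (Z.of_nat K)) as Hdl.
    rewrite <- INR_IZR_INZ in Hdl. fold d in Hdl.
    pose proof (pos_INR (S n')) as Hn0.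
    assert (Hnd : INR (S n') * d < 1).
    { eapply Rle_lt_trans; [|exact HK]. apply Rmult_le_compat_l; lra. }
    assert (Hlt : INR (S n') < INR Q - 1).
    { destruct (Rlt_or_le (INR (S n')) (INR Q - 1)) as [H|H]; auto.
      exfalso. nra. }
    apply INR_lt. rewrite minus_INR by lia. simpl INR at 2. exact Hlt.
Qed.
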